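(* Let $R$ be the stability function of an $L$-stable one-step method, i.e. $|R(z)| \le 1$ for all $z \in \mathbb{C}$ with $\operatorname{Re} z \le 0$ and $R(z) \to 0$ as $z \to \infty$. For fixed $\gamma \in \mathbb{R}$ let $R_\gamma(z) = 1 + \gamma(R(z) - 1)$ be the stability function of the relaxed update $u^{n+1}_\gamma = u^n + \gamma(u^{n+1} - u^n)$. If $R_\gamma$ is $A$-stable (i.e. $|R_\gamma(z)| \le 1$ for all $z$ with $\operatorname{Re} z \le 0$), then $\gamma \le 2$.
   Context: Applying the baseline method to $u' = \lambda u$, $\lambda \in \mathbb{C}$, yields $u^{n+1} = R(z) u^n$ with $z = \lambda \Delta t$; here $R$ is a rational function, as for (multiderivative) Runge-Kutta methods. *)

(* Defs.v *)
From HB Require Import structures.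
From mathcomp Require Import all_boot all_order all_algebra.
From mathcomp Require Import reals.
From mathcomp Require Export complex.
Set Implicit Arguments. Unset Strict Implicit. Unset Printing Implicit Defensive.
Import Order.TTheory GRing.Theory Num.Theory.
Local Open Scope ring_scope.
Local Open Scope complex_scope.

Section Stab.
Variable R : realType.
Local Notation C := (complex R).

Definition is_rational_fun (Rf : C -> C) : Prop :=
  exists P Q : {poly C}, Q != 0 /\
    forall z : C, Q.[z] != 0 -> Rf z = P.[z] / Q.[z].

(* norms `|.| are the complex modulus, valued in R[i] (real nonnegative);
   comparisons use the order of the numClosedField R[i]. *)
Definition A_stable (Rf : C -> C) : Prop :=
  forall z : C, complex.Re z <= 0 -> `|Rf z| <= 1.

Definition vanishes_at_infinity (Rf : C -> C) : Prop :=
  forall eps : R, 0 < eps -> exists M : R,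
    forall z : C, M%:C < `|z| -> `|Rf z| < eps%:C.

Definition L_stable (Rf : C -> C) : Prop :=
  A_stable Rf /\ vanishes_at_infinity Rf.

Definition relaxed_stab (gamma : R) (Rf : C -> C) (z : C) : C :=
  1 + gamma%:C * (Rf z - 1).

End Stab.

(* Main.v *)
Require Import Defs.
From HB Require Import structures.
From mathcomp Require Import all_boot all_order all_algebra.
From mathcomp Require Import reals complex.
Import Order.TTheory GRing.Theory Num.Theory.
Local Open Scope ring_scope.
Local Open Scope complex_scope.
From mathcomp Require Import ring lra.

Theorem theorem4p4 (R : realType) (Rf : complex R -> complex R) (gamma : R) :
  is_rational_fun Rf ->
  L_stable Rf ->
  A_stable (relaxed_stab gamma Rf) ->
  gamma <= 2.
Proof.
move=> _ [_ Hv] HA.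
rewrite leNgt; apply/negP => g2.
have g0 : 0 < gamma by apply: lt_trans g2.
pose eps := (gamma - 2) / (2 * gamma).
have e0 : 0 < eps by rewrite /eps divr_gt0 ?subr_gt0 ?mulr_gt0.
have [M HM] := Hv eps e0.
pose z : complex R := (- (`|M| + 1))%:C.
have Rez : complex.Re z <= 0 by rewrite /= oppr_le0 addr_ge0.
have Mz : (M%:C < `|z|)%R.
  have -> : z = - ((`|M| + 1)%:C) by rewrite /z rmorphN.
  rewrite normrN ger0_norm ?ler0c ?addr_ge0 // ltcR.
  by apply: (le_lt_trans (ler_norm M)); rewrite ltrDl.
have h1 := HA z Rez. have h2 := HM z Mz.
move: h1; rewrite /relaxed_stab.
have -> : (1 + gamma%:C * (Rf z - 1)) = gamma%:C * Rf z - (gamma - 1)%:C.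
  by rewrite rmorphB /= rmorph1; ring.
move=> h1.
have h3 : `|(gamma - 1)%:C| <= `|gamma%:C * Rf z - (gamma - 1)%:C| + `|gamma%:C * Rf z| :> complex R.
  have := ler_normD (gamma%:C * Rf z - (gamma - 1)%:C) (- (gamma%:C * Rf z)).
  by rewrite normrN addrAC subrr add0r normrN.
have ga : 0 <= gamma - 1 by rewrite subr_ge0 ltW // (lt_trans _ g2) // ltr1n.
have n1 : `|(gamma - 1)%:C| = (gamma - 1)%:C :> complex R by rewrite ger0_norm // ler0c.
have n2 : `|gamma%:C| = gamma%:C :> complex R by rewrite ger0_norm // ler0c ltW.
rewrite n1 normrM n2 in h3.
have h4 : (gamma - 1)%:C <= 1 + gamma%:C * eps%:C :> complex R.
  apply: le_trans h3 _; apply: lerD => //.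
  by apply: ler_wpM2l; [rewrite ler0c ltW | apply: ltW].
have E1 : 1 + gamma%:C * eps%:C = (1 + gamma * eps)%:C :> complex R.
  by apply/eqP; rewrite eq_complex /= !mulr0 !mul0r !subr0 !addr0 !eqxx.
move: h4; rewrite E1 lecR /eps.
have E2 : gamma * ((gamma - 2) / (2 * gamma)) = (gamma - 2) / 2.
  by rewrite invfM mulrCA (mulrC 2^-1) mulVKf ?gt_eqF.
have h5 : (gamma - 2) / 2 < gamma - 2.
  by rewrite ltr_pdivrMr // ltr_pMr ?subr_gt0 // ltr1n.
rewrite E2 => h.
have h6 : 1 + (gamma - 2) / 2 < 1 + (gamma - 2) by rewrite ltrD2l.
have E3 : 1 + (gamma - 2) = gamma - 1 by ring.
by have := le_lt_trans h h6; rewrite E3 ltxx.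
Qed.
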